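(* Every triangulated polygon $T$ with no interior vertices has a (possibly disconnected) scaffold.
   Context: A triangulated polygon with no interior vertices is a finite $2$-dimensional simplicial complex homeomorphic to a closed disk all of whose vertices lie on the boundary; its triangles are called facets. The (vertex-facet) incidence graph of $T$ is the bipartite graph whose nodes are the facets and vertices of $T$, with an arc $(v,f)$ whenever $v$ is a vertex of $f$. A scaffold is a subgraph of the incidence graph containing every facet node, in which every facet node has degree exactly $2$ and at most two vertex nodes have odd degree. (The empty triangulation has the empty scaffold.) *)

(* Defs.v *)
From mathcomp Require Import all_boot.
Set Implicit Arguments. Unset Strict Implicit. Unset Printing Implicit Defensive.

(* All vertices lie on the boundary cycle, so (up to isomorphism) the vertex
   set is 'I_n with the boundary cycle 0,1,...,n-1,0 (convex position), and a
   facet is a 3-element subset of 'I_n.  A set of such triangles is the facet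
   set of a triangulation of the convex n-gon iff distinct triangles have
   disjoint interiors (no two edges properly cross) and there are n-2 of them. *)

Definition strictly_between (a b x : nat) : bool := (minn a b < x < maxn a b)%N.

Definition chords_cross (a b c d : nat) : bool :=
  [&& a != b, c != d, a != c, a != d, b != c, b != d &
      strictly_between a b c != strictly_between a b d].

Definition is_triangle (n : nat) (f : {set 'I_n}) : bool := #|f| == 3.

Definition triangulated_polygon (n : nat) (T : {set {set 'I_n}}) : Prop :=
  [/\ (3 <= n)%N,
      {in T, forall f : {set 'I_n}, is_triangle f},
      {in T &, forall f g : {set 'I_n}, f != g ->
         forall a b c d : 'I_n, a \in f -> b \in f -> c \in g -> d \in g ->
           ~~ chords_cross a b c d}
    & #|T| = (n - 2)%N].

(* A scaffold of T: a set S of arcs (v,f) of the vertex-facet incidence graph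
   (v a vertex of the facet f in T), such that every facet node has degree
   exactly 2 and at most two vertex nodes have odd degree. *)
Definition facet_degree (n : nat) (S : {set 'I_n * {set 'I_n}}) (f : {set 'I_n}) : nat :=
  #|[set v | (v, f) \in S]|.
Definition vertex_degree (n : nat) (S : {set 'I_n * {set 'I_n}}) (v : 'I_n) : nat :=
  #|[set f | (v, f) \in S]|.

Definition scaffold (n : nat) (T : {set {set 'I_n}}) (S : {set 'I_n * {set 'I_n}}) : Prop :=
  [/\ {in S, forall e, (e.2 \in T) && (e.1 \in e.2)},
      {in T, forall f : {set 'I_n}, facet_degree S f = 2}
    & (#|[set v | odd (vertex_degree S v)]| <= 2)%N].

(* Main.v *)
Require Import Defs.
From mathcomp Require Import all_boot zify.
Set Implicit Arguments. Unset Strict Implicit. Unset Printing Implicit Defensive.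

Definition Tin n (T : {set {set 'I_n}}) (lo hi : nat) :=
  [set t in T | [forall v in t, (lo <= v <= hi)%N]].

Lemma card_range n (f : {set 'I_n}) lo hi :
  {in f, forall v : 'I_n, (lo <= v <= hi)%N} -> (#|f| <= hi.+1 - lo)%N.
Proof.
move=> Hf; rewrite cardE -(size_map val).
have U : uniq (map val (enum f)) by rewrite map_inj_uniq ?enum_uniq //; exact: val_inj.
rewrite -(size_iota lo (hi.+1 - lo)); apply: (uniq_leq_size U).
move=> x /mapP [y]; rewrite mem_enum => /Hf /andP[h1 h2] ->.
rewrite mem_iota /=; lia.
Qed.

Lemma TinP n (T : {set {set 'I_n}}) lo hi t :
  reflect (t \in T /\ {in t, forall v : 'I_n, (lo <= v <= hi)%N}) (t \in Tin T lo hi).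
Proof.
rewrite inE; apply: (iffP andP) => [[tT /forall_inP H]|[tT H]]; split => //.
by apply/forall_inP.
Qed.

Lemma nocross n (T : {set {set 'I_n}}) : triangulated_polygon T ->
  forall t s a b x y, t \in T -> s \in T -> s != t -> a \in t -> b \in t ->
  x \in s -> y \in s -> (a < x < b)%N -> ((y < a)%N || (b < y)%N) -> False.
Proof.
case=> _ _ Hnc _ t s a b x y tT sT st at' bt xs ys H1 H2.
have ts : t != s by rewrite eq_sym.
have /negP := Hnc t s tT sT ts a b x y at' bt xs ys.
apply; rewrite /chords_cross /strictly_between.
have ab : (a < b)%N by lia.
rewrite (minn_idPl (ltnW ab)) (maxn_idPr (ltnW ab)).
do 6 (apply/andP; split; first by apply/eqP; lia).
rewrite H1 /=; apply/negP; lia.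
Qed.

Lemma vd_union n (S1 S2 : {set 'I_n * {set 'I_n}}) v : [disjoint S1 & S2] ->
  vertex_degree (S1 :|: S2) v = vertex_degree S1 v + vertex_degree S2 v.
Proof.
move=> D; rewrite /vertex_degree.
have -> : [set f | (v,f) \in S1 :|: S2] = [set f | (v,f) \in S1] :|: [set f | (v,f) \in S2].
  by apply/setP=> f; rewrite !inE.
rewrite cardsU; suff -> : [set f | (v,f) \in S1] :&: [set f | (v,f) \in S2] = set0.
  by rewrite cards0 subn0.
apply/setP => f; rewrite !inE; apply/negbTE/negP => /andP[h1 h2].
by rewrite (disjointFr D h1) in h2.
Qed.

Lemma fd_union n (S1 S2 : {set 'I_n * {set 'I_n}}) f : [disjoint S1 & S2] ->
  facet_degree (S1 :|: S2) f = facet_degree S1 f + facet_degree S2 f.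
Proof.
move=> D; rewrite /facet_degree.
have -> : [set v | (v,f) \in S1 :|: S2] = [set v | (v,f) \in S1] :|: [set v | (v,f) \in S2].
  by apply/setP=> v; rewrite !inE.
rewrite cardsU; suff -> : [set v | (v,f) \in S1] :&: [set v | (v,f) \in S2] = set0.
  by rewrite cards0 subn0.
apply/setP => v; rewrite !inE; apply/negbTE/negP => /andP[h1 h2].
by rewrite (disjointFr D h1) in h2.
Qed.

Definition S3 n (t : {set 'I_n}) (E : {set 'I_n}) : {set 'I_n * {set 'I_n}} :=
  [set e | (e.2 == t) && (e.1 \in E)].

Lemma vd3 n (t E : {set 'I_n}) v : vertex_degree (S3 t E) v = (v \in E).
Proof.
rewrite /vertex_degree /S3; case vE: (v \in E).
  have -> : [set f | (v, f) \in [set e | (e.2 == t) && (e.1 \in E)]] = [set t].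
    by apply/setP => f; rewrite !inE /= vE andbT.
  by rewrite cards1.
have -> : [set f | (v, f) \in [set e | (e.2 == t) && (e.1 \in E)]] = set0.
  by apply/setP => f; rewrite !inE /= vE andbF.
by rewrite cards0.
Qed.

Lemma fd3 n (t E : {set 'I_n}) f : facet_degree (S3 t E) f = if f == t then #|E| else 0.
Proof.
rewrite /facet_degree /S3; case ft: (f == t).
  have -> : [set v | (v, f) \in [set e | (e.2 == t) && (e.1 \in E)]] = E.
    by apply/setP => v; rewrite !inE /= ft.
  by [].
have -> : [set v | (v, f) \in [set e | (e.2 == t) && (e.1 \in E)]] = set0.
  by apply/setP => v; rewrite !inE /= ft.
by rewrite cards0.
Qed.

Lemma fd0 n (S : {set 'I_n * {set 'I_n}}) (X : {set {set 'I_n}}) f :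
  {in S, forall e, e.2 \in X} -> f \notin X -> facet_degree S f = 0.
Proof.
move=> H fX; rewrite /facet_degree; apply/eqP; rewrite cards_eq0; apply/eqP.
apply/setP => v; rewrite !inE; apply/negbTE/negP => /H /=; exact/negP.
Qed.

Lemma vd0 n (S : {set 'I_n * {set 'I_n}}) (v : 'I_n) :
  {in S, forall e, e.1 != v} -> vertex_degree S v = 0.
Proof.
move=> H; rewrite /vertex_degree; apply/eqP; rewrite cards_eq0; apply/eqP.
apply/setP => f; rewrite !inE; apply/negbTE/negP => /H /=; by rewrite eqxx.
Qed.

Lemma third n (s : {set 'I_n}) x y : #|s| = 3 -> exists z, [/\ z \in s, z != x & z != y].
Proof.
move=> s3; case: (pickP [pred z | [&& z \in s, z != x & z != y]]) => [z /and3P[*]|H].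
  by exists z.
have : s \subset [set x; y].
  apply/subsetP => z zs; move: (H z); rewrite /= zs !inE /=.
  by case: (z == x) => //; case: (z == y).
move/subset_leq_card; rewrite s3 cards2; by case: (x != y).
Qed.

Lemma tri_eq n (s : {set 'I_n}) a b c : #|s| = 3 -> a \in s -> b \in s -> c \in s ->
  a != b -> a != c -> b != c -> s = [set a; b; c].
Proof.
move=> s3 as' bs cs ab ac bc; apply/esym/eqP; rewrite eqEcard s3.
have -> : [set a; b; c] \subset s by apply/subsetP => z; rewrite !inE; case/orP => [/orP[]|] /eqP ->.
rewrite [in X in _ <= X]setUC cardsU1 !inE.
by rewrite cards2 ab !(eq_sym c) (negbTE ac) (negbTE bc).
Qed.

Lemma Tin_card3 n (T : {set {set 'I_n}}) lo hi t : triangulated_polygon T ->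
  t \in Tin T lo hi -> #|t| = 3.
Proof. by case=> _ H _ _ /TinP [/H /eqP]. Qed.

Lemma Tin_disj n (T : {set {set 'I_n}}) lo m hi t : triangulated_polygon T ->
  t \in Tin T lo m -> t \in Tin T m hi -> False.
Proof.
move=> HT tL tR; have t3 := Tin_card3 HT tL; move: tL tR => /TinP [_ H1] /TinP [_ H2].
have : (#|t| <= m.+1 - m)%N.
  apply: card_range => v vt; move: (H1 v vt) (H2 v vt); lia.
by rewrite t3 subSnn.
Qed.

Lemma Tin_sub n (T : {set {set 'I_n}}) lo hi lo' hi' t :
  (lo <= lo')%N -> (hi' <= hi)%N -> t \in Tin T lo' hi' -> t \in Tin T lo hi.
Proof.
move=> h1 h2 /TinP [tT H]; apply/TinP; split => // v /H; lia.
Qed.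

Lemma split1 n (T : {set {set 'I_n}}) lo hi t (a m b : 'I_n) s :
  triangulated_polygon T -> t \in Tin T lo hi -> a \in t -> m \in t -> b \in t ->
  (a : nat) = lo -> (b : nat) = hi -> (lo < m < hi)%N -> s \in Tin T lo hi ->
  [|| s == t, s \in Tin T lo m | s \in Tin T m hi].
Proof.
move=> HT tI at' mt bt ea eb lmh sI.
case st: (s == t) => //=; move/negbT: st => st.
have s3 := Tin_card3 HT sI.
move: (sI) => /TinP [sT sR]; move: (tI) => /TinP [tT _].
case: (boolP [forall v in s, (v <= m)%N]) => [/forall_inP H|].
  by apply/orP; left; apply/TinP; split => // v vs; move: (sR v vs) (H v vs); lia.
rewrite negb_forall_in => /exists_inP [x xs]; rewrite -ltnNge => mx.
case: (boolP [forall v in s, (m <= v)%N]) => [/forall_inP H|].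
  by apply/orP; right; apply/TinP; split => // v vs; move: (sR v vs) (H v vs); lia.
rewrite negb_forall_in => /exists_inP [y ys]; rewrite -ltnNge => ym.
exfalso; have := sR x xs; have := sR y ys => ry rx.
have NC := nocross HT.
case: (ltngtP lo y) => [loy|ylo|eylo].
- apply: (NC t s a m y x) => //. 
  + move: ea loy ym. clear. lia.
  + by rewrite mx orbT.
- lia.
case: (ltngtP x hi) => [xhi|hix|exhi].
- apply: (NC t s m b x y) => //.
  + by rewrite mx eb xhi.
  + by rewrite ym.
- lia.
have [z [zs zx zy]] := third x y s3.
have := sR z zs => rz.
have zx' : (z : nat) != x by [].
have zy' : (z : nat) != y by [].
case: (ltngtP z m) => [zm|mz|ezm].
- apply: (NC t s a m z x) => //.
  + move: ea eylo rz zy' zm; clear; lia.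
  + by rewrite mx orbT.
- apply: (NC t s m b z y) => //.
  + move: eb exhi rz zx' mz; clear; lia.
  + by rewrite ym.
have ya : y = a by apply: val_inj => /=; rewrite ea.
have zm : z = m by apply: val_inj.
have xb : x = b by apply: val_inj => /=; rewrite eb.
subst y z x.
have t3 := Tin_card3 HT tI.
have am : a != m by rewrite eq_sym.
have ab : a != b.
  apply/eqP => e; move: lmh; rewrite -ea -eb e; clear; lia.
have mb : m != b by [].
move/eqP: st; apply.
by rewrite (tri_eq s3 ys zs xs am ab mb) (tri_eq t3 at' mt bt am ab mb).
Qed.

Lemma split2 n (T : {set {set 'I_n}}) lo hi : triangulated_polygon T -> (lo.+1 < hi)%N ->
  (forall s, s \in Tin T lo hi -> forall x y : 'I_n, x \in s -> y \in s ->
     (x : nat) = lo -> (y : nat) = hi -> False) ->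
  exists M, (lo < M < hi)%N /\
    forall s, s \in Tin T lo hi -> (s \in Tin T lo M) || (s \in Tin T M hi).
Proof.
move=> HT lh Hno.
pose P j := (lo < j < hi)%N && ((j == lo.+1) || [exists s in Tin T lo hi,
   exists x in s, exists y in s, (x == lo :> nat) && (y == j :> nat)]).
have exP : exists j, P j by exists lo.+1; rewrite /P eqxx ltnSn lh.
have ubP : forall j, P j -> (j <= hi)%N by move=> j /andP[/andP[_ h] _]; exact: ltnW.
case: (ex_maxnP exP ubP) => M PM maxM.
have [/andP[loM Mhi] PM'] := andP PM.
exists M; split; first by rewrite loM Mhi.
move=> s sI; have s3 := Tin_card3 HT sI; move: (sI) => /TinP [sT sR].
case: (boolP [exists x in s, (x == lo :> nat)]) => [/exists_inP [x0 x0s /eqP ex0]|nolo].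
- apply/orP; left; apply/TinP; split => // v vs.
  have := sR v vs => /andP [h1 h2]; rewrite h1 /=.
  case: (ltngtP lo v) => [lov|vlo|<-]; [|by rewrite ltnNge h1 in vlo|by apply: ltnW].
  apply: maxM; rewrite /P lov /=.
  have vhi : (v < hi)%N.
    rewrite ltn_neqAle h2 andbT; apply/eqP => e; exact: (Hno s sI x0 v x0s vs ex0 e).
  rewrite vhi /=; apply/orP; right; apply/exists_inP; exists s => //.
  apply/exists_inP; exists x0 => //; apply/exists_inP; exists v => //.
  by rewrite ex0 !eqxx.
- case: (boolP [forall v in s, (M <= v)%N]) => [/forall_inP H|].
    by apply/orP; right; apply/TinP; split => // v vs; have := sR v vs => /andP[_ ->]; rewrite H.
  rewrite negb_forall_in => /exists_inP [y ys]; rewrite -ltnNge => yM.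
  apply/orP; left; apply/TinP; split => // x xs.
  have := sR x xs => /andP [-> _] /=.
  rewrite leqNgt; apply/negP => Mx.
  have loy : (lo < y)%N.
    have := sR y ys => /andP [h _]; rewrite ltn_neqAle h andbT.
    apply/eqP => e; move/exists_inP: nolo; apply; exists y => //; by rewrite -e.
  have MS : (M == lo.+1) = false by apply/negbTE; move: loy yM; clear; lia.
  move: PM'; rewrite MS /= => /exists_inP [t tI /exists_inP [a at' /exists_inP [c ct /andP[/eqP ea /eqP ec]]]].
  have st : s != t.
    apply/eqP => e; move/exists_inP: nolo; apply; exists a; by rewrite ?e ?ea.
  move: (tI) => /TinP [tT _].
  apply: (nocross HT tT sT st at' ct ys xs).
  + by rewrite ea loy ec yM.
  + by rewrite ec Mx orbT.
Qed.

Definition Inv n (T : {set {set 'I_n}}) lo hi (S : {set 'I_n * {set 'I_n}}) : Prop :=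
  [/\ {in S, forall e, (e.2 \in Tin T lo hi) && (e.1 \in e.2)},
      {in Tin T lo hi, forall f, facet_degree S f = 2},
      (forall v : 'I_n, (v : nat) != lo -> (v : nat) != hi -> ~~ odd (vertex_degree S v))
    & (forall a b : 'I_n, (a : nat) = lo -> (b : nat) = hi ->
         odd (vertex_degree S a) = odd (vertex_degree S b))].

Lemma Tin_empty n (T : {set {set 'I_n}}) lo : triangulated_polygon T ->
  Tin T lo lo.+1 = set0.
Proof.
move=> HT; apply/setP => s; rewrite in_set0; apply/negbTE/negP => sI.
have s3 := Tin_card3 HT sI; move: sI => /TinP [_ R].
by have := card_range R; rewrite s3 subSn // subSnn.
Qed.

Lemma main n (T : {set {set 'I_n}}) : triangulated_polygon T ->
  forall k lo hi, hi = lo + k.+1 ->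
  (#|Tin T lo hi| <= k)%N /\ (#|Tin T lo hi| = k -> exists S, Inv T lo hi S).
Proof.
move=> HT k; elim/ltn_ind: k => k IH lo hi ehi.
case: k IH ehi => [|k] IH ehi.
  rewrite /Inv ehi addn1 Tin_empty // cards0; split => // _; exists set0; split.
  - by move=> e; rewrite inE.
  - by move=> f; rewrite inE.
  - by move=> v _ _; rewrite vd0 // => e; rewrite inE.
  - by move=> a b _ _; rewrite !vd0 // => e; rewrite inE.
case: (boolP [exists t in Tin T lo hi, exists a in t, exists b in t,
                (a == lo :> nat) && (b == hi :> nat)]); last first.
  move=> H.
  have Hno : forall s, s \in Tin T lo hi -> forall x y : 'I_n, x \in s -> y \in s ->
     (x : nat) = lo -> (y : nat) = hi -> False.
    move=> s sI x y xs ys ex ey; move/negP: H; apply; apply/exists_inP; exists s => //.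
    apply/exists_inP; exists x => //; apply/exists_inP; exists y => //.
    by rewrite ex ey !eqxx.
  have lh : (lo.+1 < hi)%N by rewrite ehi; clear; lia.
  have [M [/andP [loM Mhi] Hs]] := split2 HT lh Hno.
  have [bL _] := IH (M - lo).-1 ltac:(move: loM Mhi ehi; clear; lia) lo M
                    ltac:(move: loM; clear; lia).
  have [bR _] := IH (hi - M).-1 ltac:(move: loM Mhi ehi; clear; lia) M hi
                    ltac:(move: Mhi; clear; lia).
  have sub : Tin T lo hi \subset Tin T lo M :|: Tin T M hi.
    by apply/subsetP => s sI; rewrite in_setU Hs.
  have c1 := subset_leq_card sub.
  have c2 : (#|Tin T lo M :|: Tin T M hi| <= #|Tin T lo M| + #|Tin T M hi|)%N.
    by rewrite cardsU leq_subr.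
  have : (#|Tin T lo hi| <= k)%N.
    move: c1 c2 bL bR loM Mhi ehi; clear; lia.
  move=> ck; split; first exact: leqW.
  by move=> e; move: ck; rewrite e ltnn.
move/exists_inP => [t tI /exists_inP [a at' /exists_inP [b bt /andP[/eqP ea /eqP eb]]]].
have t3 := Tin_card3 HT tI.
have [m [mt ma mb]] := third a b t3.
move: (tI) => /TinP [tT tR].
have lmh : (lo < m < hi)%N.
  have ma' : (m : nat) != a by [].
  have mb' : (m : nat) != b by [].
  move: (tR m mt) ma' mb' ea eb; clear; lia.
have [loM Mhi] := andP lmh.
have [bL eqL] := IH (m - lo).-1 ltac:(move: loM Mhi ehi; clear; lia) lo m
                    ltac:(move: loM; clear; lia).
have [bR eqR] := IH (hi - m).-1 ltac:(move: loM Mhi ehi; clear; lia) m hi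
                    ltac:(move: Mhi; clear; lia).
have dec : Tin T lo hi = t |: (Tin T lo m :|: Tin T m hi).
  apply/setP => s; apply/idP/idP.
    move=> sI; case/or3P: (split1 HT tI at' mt bt ea eb lmh sI) => H;
      by rewrite in_setU1 in_setU H ?orbT.
  rewrite in_setU1 in_setU => /orP [/eqP -> // | /orP [H|H]].
    by apply: (Tin_sub _ _ H) => //; apply: ltnW.
  by apply: (Tin_sub _ _ H) => //; apply: ltnW.
have tL : t \notin Tin T lo m.
  apply/negP => /TinP [_ R]; have := R b bt; rewrite eb => /andP[_].
  by rewrite leqNgt Mhi.
have tRR : t \notin Tin T m hi.
  apply/negP => /TinP [_ R]; have := R a at'; rewrite ea => /andP[].
  by rewrite leqNgt loM.
have cLR : #|Tin T lo m :|: Tin T m hi| = #|Tin T lo m| + #|Tin T m hi|.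
  rewrite cardsU; suff -> : Tin T lo m :&: Tin T m hi = set0 by rewrite cards0 subn0.
  apply/setP => s; rewrite in_setI in_set0; apply/negbTE/negP => /andP[h1 h2].
  exact: Tin_disj HT h1 h2.
have ctot : #|Tin T lo hi| = (#|Tin T lo m| + #|Tin T m hi|).+1.
  by rewrite dec cardsU1 in_setU (negbTE tL) (negbTE tRR) cLR.
split.
  rewrite ctot; move: bL bR loM Mhi ehi; clear; lia.
move=> eqc.
have eL : #|Tin T lo m| = (m - lo).-1.
  move: eqc ctot bL bR loM Mhi ehi; clear; lia.
have eR : #|Tin T m hi| = (hi - m).-1.
  move: eqc ctot bL bR loM Mhi ehi; clear; lia.
have [SL [L1 L2 L3 L4]] := eqL eL.
have [SR [R1 R2 R3 R4]] := eqR eR.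
set p := odd (vertex_degree SL a).
set q := odd (vertex_degree SR m).
pose E := if p == q then [set a; b] else [set a; m].
have ab : a != b.
  apply/eqP => e; move: lmh; rewrite -ea -eb e; clear; lia.
have Esub : E \subset t.
  by rewrite /E; case: (p == q); apply/subsetP => z; rewrite !inE => /orP[] /eqP ->.
have Ec : #|E| = 2.
  by rewrite /E; case: (p == q); rewrite cards2 ?ab // eq_sym ma.
have aE : a \in E by rewrite /E; case: (p == q); rewrite !inE eqxx.
have bE : (b \in E) = (p == q).
  by rewrite /E; case: (p == q); rewrite !inE ?eqxx ?orbT // eq_sym (negbTE ab) eq_sym (negbTE mb).
have mE : (m \in E) = (p != q).
  by rewrite /E; case: (p == q); rewrite !inE ?eqxx ?orbT // (negbTE ma) (negbTE mb).
have oE : forall v, v != a -> v != b -> v != m -> v \notin E.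
  move=> v va vb vm; rewrite /E; case: (p == q); rewrite !inE negb_or ?va ?vb ?vm //.
have dLR : [disjoint SL & SR].
  rewrite -setI_eq0; apply/eqP/setP => e; rewrite !inE; apply/negbTE/negP => /andP[h1 h2].
  have /andP [h1' _] := L1 e h1; have /andP [h2' _] := R1 e h2.
  exact: Tin_disj HT h1' h2'.
have dU3 : [disjoint SL :|: SR & S3 t E].
  rewrite -setI_eq0; apply/eqP/setP => e; rewrite !inE; apply/negbTE/negP.
  move=> /andP[/orP[h|h] /andP[/eqP e2 _]].
    by have /andP [h' _] := L1 e h; rewrite e2 (negbTE tL) in h'.
  by have /andP [h' _] := R1 e h; rewrite e2 (negbTE tRR) in h'.
have vdE : forall v, vertex_degree (SL :|: SR :|: S3 t E) v =
   vertex_degree SL v + vertex_degree SR v + (v \in E).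
  by move=> v; rewrite vd_union // vd_union // vd3.
have fdE : forall f, facet_degree (SL :|: SR :|: S3 t E) f =
   facet_degree SL f + facet_degree SR f + (if f == t then #|E| else 0).
  by move=> f; rewrite fd_union // fd_union // fd3.
have L1' : {in SL, forall e, e.2 \in Tin T lo m} by move=> e /L1 /andP[].
have R1' : {in SR, forall e, e.2 \in Tin T m hi} by move=> e /R1 /andP[].
exists (SL :|: SR :|: S3 t E); split.
- move=> e; rewrite !in_setU => /orP[/orP[h|h]|h].
  + have /andP [h1 ->] := L1 e h; rewrite andbT.
    by apply: (Tin_sub _ _ h1) => //; apply: ltnW.
  + have /andP [h1 ->] := R1 e h; rewrite andbT.
    by apply: (Tin_sub _ _ h1) => //; apply: ltnW.
  + move: h; rewrite /S3 inE => /andP[/eqP -> h]; rewrite tI /=.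
    exact: (subsetP Esub).
- move=> f; rewrite fdE dec in_setU1 in_setU => /orP[/eqP ->|/orP[fL|fR]].
  + by rewrite (fd0 L1' tL) (fd0 R1' tRR) eqxx Ec.
  + have fR : f \notin Tin T m hi by apply/negP => fR; exact: Tin_disj HT fL fR.
    have ft : (f == t) = false by apply/negbTE; apply: contraNneq tL => <-.
    by rewrite L2 // (fd0 R1' fR) ft.
  + have fL : f \notin Tin T lo m by apply/negP => fL; exact: Tin_disj HT fL fR.
    have ft : (f == t) = false by apply/negbTE; apply: contraNneq tRR => <-.
    by rewrite R2 // (fd0 L1' fL) ft.
- move=> v vlo vhi; rewrite vdE !oddD.
  have va : v != a by apply: contraNneq vlo => ->; rewrite ea.
  have vb : v != b by apply: contraNneq vhi => ->; rewrite eb.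
  case: (eqVneq v m) => [->|vm].
    rewrite -/q mE -(L4 a m) // -/p.
    by case: (p); case: (q).
  have vm' : (v : nat) != m by [].
  rewrite (negbTE (L3 v vlo vm')) (negbTE (R3 v vm' vhi)) (negbTE (oE v va vb vm)).
  by [].
- move=> a' b' ea' eb'.
  have -> : a' = a by apply: val_inj; rewrite /= ea' ea.
  have -> : b' = b by apply: val_inj; rewrite /= eb' eb.
  rewrite !vdE !oddD aE bE -/p.
  have am' : (a : nat) != m by rewrite eq_sym.
  have ah' : (a : nat) != hi by rewrite ea; move: loM Mhi; clear; lia.
  have bl' : (b : nat) != lo by rewrite eb; move: loM Mhi; clear; lia.
  have bm' : (b : nat) != m.
    by apply/eqP => e; move/eqP: mb; apply; apply: val_inj; rewrite /= e.
  rewrite (negbTE (R3 a am' ah')) (negbTE (L3 b bl' bm')) -(R4 m b) // -/q.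
  by case: (p); case: (q).
Qed.

Theorem lemma3 (n : nat) (T : {set {set 'I_n}}) :
  triangulated_polygon T -> exists S : {set 'I_n * {set 'I_n}}, scaffold T S.
Proof.
move=> HT; have [n3 _ _ cT] := HT.
have eT : Tin T 0 n.-1 = T.
  apply/setP => t; rewrite inE; case tT: (t \in T) => //=.
  apply/forall_inP => v _; move: (ltn_ord v); clear; lia.
have [_ H] := main HT (k := n - 2) (lo := 0) (hi := n.-1) ltac:(move: n3; clear; lia).
rewrite eT in H; have [S [S1 S2 S3' S4]] := H cT.
rewrite eT in S1 S2.
exists S; split => //.
have n0 : (0 < n)%N by move: n3; clear; lia.
have n1 : (n.-1 < n)%N by move: n3; clear; lia.
pose a0 : 'I_n := Ordinal n0.
pose b0 : 'I_n := Ordinal n1.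
apply: leq_trans (subset_leq_card (_ : _ \subset [set a0; b0])) _.
  apply/subsetP => v; rewrite inE => ov; rewrite !inE.
  case: (eqVneq (v : nat) 0) => [e|v0].
    by apply/orP; left; apply/eqP; apply: val_inj.
  case: (eqVneq (v : nat) n.-1) => [e|v1].
    by apply/orP; right; apply/eqP; apply: val_inj.
  by rewrite (negbTE (S3' v v0 v1)) in ov.
by rewrite cards2; case: (_ != _).
Qed.
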